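(* Let $G$ be a finite simple undirected graph with adjacency matrix $A=\sum_{r=0}^d\theta_rE_r$ (spectral decomposition), let $a,b$ be vertices, let $w_1,\dots,w_k$ and integers $f^r_\ell$ be as in the context, so that $\theta_r=\sum_{\ell=1}^k f^r_\ell w_\ell$, and define $F:\mathbb{T}^k\to\mathbb{C}$ by $F(\overline{z})=\sum_{r=0}^d\langle a|E_r|b\rangle\,e^{\mathrm{i} f^r(\overline{z})}$. Then for every integer $\ell\ge1$ the number \[\frac{1}{(2\pi)^{k}}\int_{\mathbb{T}^k}|F(\overline{z})|^{2\ell}\,\mathrm{d}\overline{z}\] is rational.
   Context: Here $\theta_0,\dots,\theta_d$ are the distinct eigenvalues of $A$ and $E_r$ is the orthogonal projection onto the $\theta_r$-eigenspace. Fix real numbers $w_1,\dots,w_k$ that are linearly independent over $\mathbb{Q}$ and such that every $\theta_r$ is an integer linear combination $\theta_r=\sum_{\ell=1}^k f^r_\ell w_\ell$ with $f^r_\ell\in\mathbb{Z}$. For $\overline{z}=(z_1,\dots,z_k)$ write $f^r(\overline{z})=\sum_{\ell=1}^k f^r_\ell z_\ell$. $\mathbb{T}^k=\mathbb{R}^k/2\pi\mathbb{Z}^k$ is the $k$-torus with Lebesgue measure $\mathrm{d}\overline{z}$, of total volume $(2\pi)^k$. *)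

(* Defs.v *)
From HB Require Import structures.
From mathcomp Require Import all_boot all_order all_algebra.
From mathcomp Require Import all_classical all_reals all_analysis.
From mathcomp Require Import complex.
Set Implicit Arguments. Unset Strict Implicit. Unset Printing Implicit Defensive.
Import Order.TTheory GRing.Theory Num.Theory.
Local Open Scope ring_scope.
Local Open Scope classical_set_scope.

Definition simple_graph (n : nat) (e : rel 'I_n) : Prop :=
  (forall x y, e x y = e y x) /\ (forall x, ~~ e x x).

Definition adjmx (R : nzRingType) (n : nat) (e : rel 'I_n) : 'M[R]_n :=
  \matrix_(i, j) (e i j)%:R.

Definition Q_lin_indep (R : realType) (k : nat) (w : 'I_k -> R) : Prop :=
  forall c : 'I_k -> rat, \sum_(l < k) ratr (c l) * w l = 0 -> forall l, c l = 0.

Definition orth_proj (R : fieldType) (n : nat) (E U : 'M[R]_n) : Prop :=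
  E^T = E /\ E *m E = E /\ (E == U)%MS.

Fixpoint torus_int (R : realType) (k : nat) (g : seq R -> R) : R :=
  match k with
  | 0 => g [::]
  | k'.+1 => Rintegral (@lebesgue_measure R) `[0, pi *+ 2]%classic
               (fun x => torus_int k' (fun s => g (x :: s)))
  end.

Definition expi (R : realType) (t : R) : R[i] := (cos t +i* sin t)%C.

Definition cmod (R : realType) (z : R[i]) : R := ComplexField.Normc.normc z.

(* Main.v *)
Set Warnings "-notation-overridden,-ambiguous-paths,-notation-incompatible-prefix,-deprecated".
Require Import Defs.
From HB Require Import structures.
From mathcomp Require Import all_boot all_order all_algebra.
From mathcomp Require Import all_classical all_reals all_analysis.
From mathcomp Require Import complex.
From mathcomp Require Import ring lra.
Import Order.TTheory GRing.Theory Num.Theory.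
Local Open Scope ring_scope.
Import numFieldNormedType.Exports.
Local Open Scope classical_set_scope.
Section S.
Variable R : realType.
Notation mu := (@lebesgue_measure R).

Lemma sin_per (n : int) (phi : R) : sin (n%:~R * (pi *+ 2) + phi) = sin phi.
Proof.
have P : periodic (@sin R) (pi *+ 2).
  by move=> u; rewrite mulr2n addrA !sinDpi opprK.
case: n => m.
  by rewrite pmulrn mulrC mulr_natr addrC (periodicn P).
rewrite NegzE mulrNz mulrC mulrN mulr_natr -[in RHS](subrK (pi *+ 2 *+ m.+1) phi).
by rewrite (periodicn P) addrC.
Qed.

Lemma dF (c phi x : R) : c != 0 ->
  is_derive x 1 (fun y => c^-1 * sin (c * y + phi)) (cos (c * x + phi)).
Proof.
move=> c0.
have dg : is_derive x 1 (fun y : R => c * y + phi) c.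
  have H : is_derive x 1 ((c \*: id) + cst phi) (c *: (1:R) + 0).
    apply: is_deriveD.
  apply: (is_derive_eq H); rewrite addr0; exact: mulr1.
have := @is_derive1_comp R sin (fun y => c * y + phi) x _ _ (is_derive_sin (c * x + phi)) dg.
move=> H; have := is_deriveZ c^-1 H.
move=> H2; apply: (is_derive_eq H2).
change (c^-1 * (cos (c * x + phi) * c) = cos (c * x + phi)).
by rewrite mulrCA mulVf // mulr1.
Qed.

Lemma der_cont (f : R -> R) (x df : R) : is_derive x (1:R) f df -> f @ x --> f x.
Proof. by move=> [d _]; exact/differentiable_continuous/derivable1_diffP. Qed.

Lemma aff_der (c phi x : R) : is_derive x 1 (fun y : R => c * y + phi) c.
Proof.
  have H : is_derive x 1 ((c \*: id) + cst phi) (c *: (1:R) + 0).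
    apply: is_deriveD.
  apply: (is_derive_eq H); rewrite addr0; exact: mulr1.
Qed.

Lemma cos_aff_cont (c phi : R) : continuous (fun y => cos (c * y + phi)).
Proof.
move=> x; apply: (@der_cont _ x (- sin (c * x + phi) * c)).
exact: (@is_derive1_comp R cos (fun y => c * y + phi) x _ _ (is_derive_cos (c * x + phi)) (aff_der c phi x)).
Qed.

Lemma int_cos (n : int) (phi : R) :
  Rintegral mu `[0, pi *+ 2]%classic (fun x => cos (n%:~R * x + phi)) =
  if n == 0 then pi *+ 2 * cos phi else 0.
Proof.
have p0 : (0 : R) < pi *+ 2 by rewrite mulrn_wgt0 // pi_gt0.
case: eqP => [->|/eqP n0].
  under eq_Rintegral do rewrite mul0r add0r.
  rewrite Rintegral_cst //= lebesgue_measure_itv /= lte_fin p0 /= subr0 mulrC //.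
have c0 : (n%:~R : R) != 0 by rewrite intr_eq0.
rewrite /Rintegral (@continuous_FTC2 _ _ (fun y => (n%:~R)^-1 * sin (n%:~R * y + phi))) //=.
- by rewrite mulr0 add0r sin_per subrr.
- by apply: continuous_in_subspaceT => x _; apply: cos_aff_cont.
- split.
  + by move=> x _; case: (dF _ phi x c0).
  + by apply: cvg_at_right_filter; apply: der_cont (dF _ phi 0 c0).
  + by apply: cvg_at_left_filter; apply: der_cont (dF _ phi _ c0).
- move=> x _; rewrite derive1E; have := dF _ phi x c0; by case=> _ ->.
Qed.
Lemma cont_sum (T : Type) (s : seq T) (g : T -> R -> R) :
  (forall t, continuous (g t)) -> continuous (fun x => \sum_(t <- s) g t x).
Proof.
move=> cg; elim: s => [|t s IH].
  under eq_fun do rewrite big_nil; exact: cst_continuous.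
under eq_fun do rewrite big_cons.
move=> x; apply: continuousD; [exact: cg | exact: IH].
Qed.

Lemma cos_cont_mul (a c phi : R) : continuous (fun y => a * cos (c * y + phi)).
Proof. move=> x; apply: continuousM; [exact: cst_continuous | exact: cos_aff_cont]. Qed.

Lemma int_sum_cos (T : Type) (s : seq T) (a : T -> R) (n : T -> int) (ph : T -> R) :
  Rintegral mu `[0, pi *+ 2]%classic (fun x => \sum_(t <- s) a t * cos ((n t)%:~R * x + ph t)) =
  \sum_(t <- s) a t * (if n t == 0 then pi *+ 2 * cos (ph t) else 0).
Proof.
have integ f : continuous f -> mu.-integrable `[0, pi *+ 2]%classic (EFin \o f).
  move=> cf; apply: continuous_compact_integrable; first exact: segment_compact.
  by apply: continuous_in_subspaceT => x _; apply: cf.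
elim: s => [|t s IH].
  under eq_Rintegral do rewrite big_nil.
  by rewrite Rintegral_cst //= mul0r big_nil.
under eq_Rintegral do rewrite big_cons.
rewrite RintegralD //; first last.
- by apply: integ; apply: cont_sum => u; apply: cos_cont_mul.
- by apply: integ; apply: cos_cont_mul.
rewrite IH big_cons RintegralZl ?int_cos //.
by apply: integ; apply: cos_aff_cont.
Qed.

Definition dotk (k : nat) (m : nat -> int) (z : seq R) : R :=
  \sum_(j < k) (m j)%:~R * nth 0 z j.

Lemma dotkS k m x z : dotk k.+1 m (x :: z) = (m 0%N)%:~R * x + dotk k (fun j => m j.+1) z.
Proof. by rewrite /dotk big_ord_recl. Qed.

Lemma forall_ordS k (m : nat -> int) :
  [forall j : 'I_k.+1, m j == 0] = (m 0%N == 0) && [forall j : 'I_k, m j.+1 == 0].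
Proof.
apply/forallP/andP => [H|[H0 /forallP H] j].
  split; first exact: (H ord0).
  by apply/forallP => j; exact: (H (lift ord0 j)).
case: j => [[|j] lt] //=; exact: (H (Ordinal (lt : j < k)%N)).
Qed.

Lemma torus_int_ext k (g1 g2 : seq R -> R) : g1 =1 g2 -> torus_int k g1 = torus_int k g2.
Proof. by move=> /funext ->. Qed.

Lemma torus_cos k (T : Type) (s : seq T) (a : T -> R) (m : T -> nat -> int) (ph : T -> R) :
  torus_int k (fun z => \sum_(t <- s) a t * cos (dotk k (m t) z + ph t)) =
  (pi *+ 2) ^+ k * \sum_(t <- s) a t * (if [forall j : 'I_k, m t j == 0] then cos (ph t) else 0).
Proof.
elim: k a m ph => [|k IH] a m ph /=.
  rewrite expr0 mul1r; apply: eq_bigr => t _.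
  by rewrite /dotk big_ord0 add0r; case: forallP => // [[]] [].
have E x : torus_int k (fun z => \sum_(t <- s) a t * cos (dotk k.+1 (m t) (x :: z) + ph t)) =
   \sum_(t <- s) ((pi *+ 2) ^+ k * a t * (if [forall j : 'I_k, m t j.+1 == 0] then 1 else 0)) *
      cos ((m t 0%N)%:~R * x + ph t).
  rewrite (@torus_int_ext _ _ (fun z => \sum_(t <- s) a t *
       cos (dotk k (fun j => m t j.+1) z + ((m t 0%N)%:~R * x + ph t)))); last first.
    by move=> z; apply: eq_bigr => t _; rewrite dotkS -addrA addrCA.
  rewrite (IH a (fun t j => m t j.+1) (fun t => (m t 0%N)%:~R * x + ph t)) big_distrr /=; apply: eq_bigr => t _.
  by case: ifP; rewrite ?mulr1 ?mulr0 ?mul0r ?mulrA.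
under eq_Rintegral => x _ do rewrite E.
rewrite int_sum_cos exprS -mulrA big_distrr /= big_distrr /=; apply: eq_bigr => t _.
rewrite (forall_ordS k (m t)); case: eqP => _; case: ifP => _ /=; rewrite ?mulr1 ?mulr0 ?mul0r //.
by rewrite mulrCA !mulrA.
Qed.
End S.
Section Spec.
Variable R : realType.
Local Open Scope complex_scope.

Lemma real_re (z : R[i]) : z \is Num.real -> z = (complex.Re z)%:C.
Proof.
case: z => a b; rewrite realE !lecE /= => /orP [] /andP [/eqP H _]; [by rewrite H | by rewrite -H].
Qed.

Lemma sym_diag n (A : 'M[R]_n.+1) : A^T = A ->
  exists2 rs : seq R, uniq rs & (\sum_(x <- rs) eigenspace A x :=: 1%:M)%MS.
Proof.
move=> symA.
pose f := (real_complex R : {rmorphism R -> R[i]}).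
pose Ac := map_mx f A.
have Herm : Ac \is hermsymmx.
  apply: realsym_hermsym.
    apply/is_hermitianmxP; rewrite expr0 scale1r map_mx_id // /Ac map_trmx symA //.
  apply/mxOverP; move=> i j; rewrite mxE /f realE !lecE /= eqxx /=; exact: le_total.
have /orthomx_spectralP Ac_eq := hermitian_normalmx Herm.
have Dreal := hermitian_spectral_diag_real Herm.
set P := spectralmx Ac in Ac_eq; set D := spectral_diag Ac in Ac_eq Dreal.
pose rs := undup [seq complex.Re (D 0 i) | i <- enum 'I_n.+1].
apply/diagonalizablePeigen/diagonalizableP.
exists rs; first exact: undup_uniq.
apply: mxminpoly_min.
apply: (@map_mx_inj _ _ f); rewrite map_horner_mx map_mx0 -/Ac.
have Pu : P \in unitmx by exact: spectral_unit.
rewrite Ac_eq -{2}(invmxK P) horner_mx_uconj ?unitmx_inv // horner_mx_diag.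
have -> : (D ^ horner (map_poly f (\prod_(x <- rs) ('X - x%:P))))%sesqui = 0.
  apply/rowP => i; rewrite !mxE.
  have -> : D 0 i = f (complex.Re (D 0 i)).
    by apply: real_re; apply: (mxOverP Dreal).
  rewrite horner_map (rootP _) ?rmorph0 //.
  by rewrite root_prod_XsubC mem_undup; apply/mapP; exists i; rewrite ?mem_enum.
have -> : diag_mx (0 : 'rV[R[i]]_n.+1) = 0 by apply/matrixP => i j; rewrite !mxE mul0rn.
by rewrite mulmx0 mul0mx.
Qed.
End Spec.
Fixpoint mpow (K : pzRingType) (n : nat) (M : 'M[K]_n.+1) (c : nat) : 'M[K]_n.+1 :=
  if c is c'.+1 then mpow K n M c' *m M else 1%:M.
Arguments mpow {K n}.
Section SD.
Variables (R : realType) (n d : nat) (A : 'M[R]_n.+1) (theta : 'I_d.+1 -> R)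
  (E : 'I_d.+1 -> 'M[R]_n.+1).
Hypotheses (symA : A^T = A) (injT : injective theta)
  (hall : forall x, eigenvalue A x -> exists r, theta r = x)
  (hE : forall r, orth_proj (E r) (eigenspace A (theta r))).

Lemma EA r : E r *m A = theta r *: E r.
Proof.
have [_ [_ /andP [H _]]] := hE r; exact/eigenspaceP.
Qed.

Lemma AE r : A *m E r = theta r *: E r.
Proof.
have [Et _] := hE r.
by rewrite -{1}symA -{1}Et -trmx_mul EA linearZ /= Et.
Qed.

Lemma vE m (V : 'M[R]_(m, n.+1)) s r : (V <= eigenspace A (theta s))%MS ->
  V *m E r = if r == s then V else 0.
Proof.
move=> Vs; case: eqP => [->|/eqP rs].
  have [_ [EE /andP [_ H]]] := hE s.
  have /submxP [D ->] := submx_trans Vs H.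
  by rewrite -mulmxA EE.
have h1 : V *m A = theta s *: V by apply/eigenspaceP.
have : (theta s - theta r) *: (V *m E r) = 0.
  by rewrite scalerBl scalemxAl -h1 scalemxAr -AE mulmxA subrr.
move/eqP; rewrite scalemx_eq0 subr_eq0 => /orP [/eqP H|/eqP //].
by move: rs; rewrite (injT _ _ H) eqxx.
Qed.

Lemma sumE : \sum_r E r = 1%:M.
Proof.
have [rs _ H] := @sym_diag R n A symA.
suff : (1%:M <= kermx (\sum_r E r - 1%:M))%MS.
  by move/sub_kermxP; rewrite mul1mx => /eqP; rewrite subr_eq0 => /eqP.
rewrite -H; elim: rs {H} => [|x rs IH]; first by rewrite big_nil sub0mx.
rewrite big_cons addsmx_sub IH andbT; apply/sub_kermxP.
have [ev|nev] := boolP (eigenvalue A x); last first.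
  by move: nev; rewrite /eigenvalue negbK => /eqP ->; rewrite mul0mx.
have [s <-] := hall _ ev.
rewrite mulmxBr mulmx1 mulmx_sumr.
rewrite (eq_bigr (fun r => if r == s then eigenspace A (theta s) else 0)); last first.
  by move=> r _; apply: vE.
by rewrite -big_mkcond big_pred1_eq subrr.
Qed.


Lemma mpowE c : mpow A c = \sum_r (theta r ^+ c) *: E r.
Proof.
elim: c => [|c IH] /=.
  by rewrite -sumE; apply: eq_bigr => r _; rewrite expr0 scale1r.
rewrite IH mulmx_suml; apply: eq_bigr => r _.
by rewrite -scalemxAl EA scalerA exprSr.
Qed.
End SD.
Section Alg.
Variables (R : realType) (I : finType) (x th : I -> R).

Definition isQ (y : R) := exists q : rat, y = ratr q.
Lemma isQ_ratr q : isQ (ratr q). Proof. by exists q. Qed.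
Lemma isQD a b : isQ a -> isQ b -> isQ (a + b).
Proof. by move=> [p ->] [q ->]; exists (p + q); rewrite rmorphD. Qed.
Lemma isQM a b : isQ a -> isQ b -> isQ (a * b).
Proof. by move=> [p ->] [q ->]; exists (p * q); rewrite rmorphM. Qed.
Lemma isQN a : isQ a -> isQ (- a).
Proof. by move=> [p ->]; exists (- p); rewrite rmorphN. Qed.
Lemma isQn m : isQ (m%:R). Proof. by exists m%:R; rewrite rmorph_nat. Qed.
Lemma isQX a m : isQ a -> isQ (a ^+ m).
Proof. by move=> [p ->]; exists (p ^+ m); rewrite rmorphXn. Qed.
Lemma isQ_sum (T : Type) (s : seq T) (P : pred T) (F : T -> R) :
  (forall t, P t -> isQ (F t)) -> isQ (\sum_(t <- s | P t) F t).
Proof.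
move=> H; elim/big_rec: _ => [|t y Pt Hy]; first exact: (isQn 0).
exact: isQD (H t Pt) Hy.
Qed.

Fixpoint tups (n : nat) : seq (seq I) :=
  if n is n'.+1 then flatten [seq [seq r :: u | u <- tups n'] | r <- enum I]
  else [:: [::]].

Definition Cf (u : seq I) : R := \prod_(r <- u) x r.

Fixpoint acc {V : zmodType} (g : I -> V) (es : seq bool) (u : seq I) : V :=
  match es, u with
  | e :: es', r :: u' => (if e then g r else - g r) + acc g es' u'
  | _, _ => 0
  end.

Lemma sum_tupsS (V : nmodType) n (G : seq I -> V) :
  \sum_(u <- tups n.+1) G u = \sum_r \sum_(u <- tups n) G (r :: u).
Proof.
rewrite /= big_flatten big_map big_enum /=; apply: eq_bigr => r _.
by rewrite big_map.
Qed.

Definition Sm (es : seq bool) (G : R -> R) : R :=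
  \sum_(u <- tups (size es)) Cf u * G (acc th es u).

Lemma Sm_cons e es G : Sm (e :: es) G =
  \sum_r x r * Sm es (fun y => G ((if e then th r else - th r) + y)).
Proof.
rewrite /Sm /= sum_tupsS; apply: eq_bigr => r _; rewrite big_distrr.
by apply: eq_bigr => u _; rewrite /Cf big_cons /= mulrA.
Qed.

Lemma Sm_sum es N (h : 'I_N -> R -> R) :
  Sm es (fun y => \sum_(i < N) h i y) = \sum_(i < N) Sm es (h i).
Proof.
rewrite /Sm; under eq_bigr do rewrite big_distrr.
by rewrite exchange_big.
Qed.

Lemma Sm_scale es c h : Sm es (fun y => c * h y) = c * Sm es h.
Proof.
rewrite /Sm big_distrr; apply: eq_bigr => u _; exact: mulrCA.
Qed.

Lemma Sm_ext es G1 G2 : (forall u, u \in tups (size es) -> G1 (acc th es u) = G2 (acc th es u)) ->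
  Sm es G1 = Sm es G2.
Proof. by move=> H; rewrite /Sm; apply: eq_big_seq => u /H ->. Qed.

Hypothesis hpow : forall c, isQ (\sum_r x r * th r ^+ c).

Lemma Sm_moment es p : isQ (Sm es (fun y => y ^+ p)).
Proof.
elim: es p => [|e es IH] p.
  rewrite /Sm /= big_cons big_nil /Cf big_nil addr0 mul1r expr0n.
  exact: isQn.
rewrite Sm_cons.
pose sg : R := if e then 1 else -1.
have Hs r : (if e then th r else - th r) = sg * th r.
  by rewrite /sg; case: (e); rewrite ?mul1r ?mulN1r.
have Hr r : Sm es (fun y => ((if e then th r else - th r) + y) ^+ p) =
    \sum_(i < p.+1) (sg ^+ (p - i) *+ 'C(p, i) * th r ^+ (p - i)) * Sm es (fun y => y ^+ i).
  rewrite (@Sm_ext es _ (fun y => \sum_(i < p.+1) (sg ^+ (p - i) *+ 'C(p, i) * th r ^+ (p - i)) * y ^+ i)); last first.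
    move=> u _; rewrite Hs exprDn; apply: eq_bigr => i _.
    by rewrite exprMn !mulrnAl.
  rewrite (@Sm_sum es p.+1 (fun (i : 'I_p.+1) y => (sg ^+ (p - i) *+ 'C(p, i) * th r ^+ (p - i)) * y ^+ i)).
  by apply: eq_bigr => i _; rewrite Sm_scale.
under eq_bigr do rewrite Hr big_distrr.
rewrite exchange_big /=; apply: isQ_sum => i _.
rewrite (eq_bigr (fun r => (sg ^+ (p - i) *+ 'C(p, i) * Sm es (fun y => y ^+ i)) * (x r * th r ^+ (p - i)))); last by move=> r _; ring.
rewrite -big_distrr /=; apply: isQM; last exact: hpow.
apply: isQM; last exact: IH.
rewrite -mulr_natr; apply: isQM; last exact: isQn.
apply: isQX; rewrite /sg; case: (e); [exact: (isQn 1) | exact/isQN/(isQn 1)].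
Qed.

Lemma Sm_poly es (q : {poly rat}) : isQ (Sm es (fun y => (map_poly (ratr : rat -> R) q).[y])).
Proof.
rewrite (@Sm_ext es _ (fun y => \sum_(i < size q) ratr q`_i * y ^+ i)); last first.
  move=> u _; rewrite (@horner_coef_wide _ (size q)) ?size_map_poly //.
  by apply: eq_bigr => i _; rewrite coef_map.
rewrite (@Sm_sum es (size q) (fun i y => ratr q`_i * y ^+ i)).
apply: isQ_sum => i _; rewrite Sm_scale; apply: isQM; [exact: isQ_ratr | exact: Sm_moment].
Qed.

Definition alg (y : R) := exists2 p : {poly rat}, p != 0 & root (map_poly ratr p) y.

Lemma alg_sub a b : alg a -> alg b -> alg (a - b).
Proof.
move=> [p p0 /rootP pa] [q q0 /rootP qb]; exists (sub_annihilant p q).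
  exact: sub_annihilant_neq0.
by apply/rootP; apply: map_sub_annihilantP.
Qed.

Lemma alg0 : alg 0.
Proof. by exists 'X; [rewrite polyX_eq0 | rewrite map_polyX rootX]. Qed.

Lemma alg_acc es u : (forall r, alg (th r)) -> alg (acc th es u).
Proof.
move=> H; elim: es u => [|e es IH] [|r u] //=; try exact: alg0.
have -> : forall a b : R, a + b = a - (0 - b) by move=> a b; rewrite sub0r opprK.
apply: alg_sub; last by apply: alg_sub; [exact: alg0 | exact: IH].
case: (e); first exact: H.
by rewrite -sub0r; apply: alg_sub; [exact: alg0 | exact: H].
Qed.

Lemma alg_strip y : alg y -> y != 0 -> exists h : {poly rat}, h.[0] != 0 /\ root (map_poly ratr h) y.
Proof.
move=> [p] + + y0; have [n le] := ubnP (size p); elim: n p le => // n IH p le p0 py.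
have [h0|h0] := eqVneq p.[0] 0; last by exists p.
have /factor_theorem [p' Dp] : root p 0 by apply/rootP.
have p'0 : p' != 0 by apply: contraNneq p0 => E; rewrite Dp E mul0r.
apply: (IH p') => //.
  rewrite -ltnS (leq_trans _ le) // ltnS Dp size_mul ?polyXsubC_eq0 //.
  by rewrite size_XsubC addn2 /= leqnn.
move: py; rewrite Dp rmorphM /= rootM => /orP [] // .
by rewrite rmorphB /= map_polyX map_polyC /= rmorph0 subr0 rootX (negPf y0).
Qed.

Lemma interp (L : seq R) : (forall y, y \in L -> alg y) ->
  exists q : {poly rat}, (map_poly (ratr : rat -> R) q).[0] = 1 /\
    forall y, y \in L -> y != 0 -> (map_poly (ratr : rat -> R) q).[y] = 0.
Proof.
elim: L => [|y L IH] H.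
  by exists 1; rewrite rmorph1 hornerC.
have [q [q0 qL]] : exists q : {poly rat}, (map_poly (ratr : rat -> R) q).[0] = 1 /\
    forall y, y \in L -> y != 0 -> (map_poly (ratr : rat -> R) q).[y] = 0.
  by apply: IH => z zL; apply: H; rewrite inE zL orbT.
have [y0|y0] := eqVneq y 0.
  exists q; split => // z; rewrite inE => /orP [/eqP ->|]; first by rewrite y0 eqxx.
  exact: qL.
have [h [h0 hy]] := @alg_strip y (H y (mem_head _ _)) y0.
exists (q * h * (h.[0])^-1%:P); split.
  rewrite !rmorphM /= !hornerM q0 mul1r map_polyC hornerC /=.
  by rewrite -(rmorph0 ratr) horner_map /= -rmorphM mulfV // rmorph1.
move=> z; rewrite inE => /orP [/eqP ->|zL z0].
  by rewrite !rmorphM /= !hornerM (rootP hy) mulr0 mul0r.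
by rewrite !rmorphM /= !hornerM qL // !mul0r.
Qed.

Lemma Sm_zero_rat es : (forall r, alg (th r)) ->
  isQ (Sm es (fun y => if y == 0 then 1 else 0)).
Proof.
move=> H.
have HL : forall y, y \in [seq acc th es u | u <- tups (size es)] -> alg y.
  by move=> y /mapP [u _ ->]; exact: alg_acc.
have [q [q0 qL]] := interp _ HL.
rewrite (@Sm_ext es _ (fun y => (map_poly (ratr : rat -> R) q).[y])); first exact: Sm_poly.
move=> u uin; case: eqP => [->|/eqP ne]; first by rewrite q0.
by rewrite qL //; apply/mapP; exists u.
Qed.
End Alg.
Arguments tups {I}.
Arguments Cf {R I}.
Arguments acc {I V}.
Arguments sum_tupsS {I V}.
Section Cx.
Variables (R : realType) (I : finType) (x ph : I -> R).
Local Open Scope complex_scope.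

Lemma ReD (u v : R[i]) : complex.Re (u + v) = complex.Re u + complex.Re v.
Proof. by case: u; case: v. Qed.
Lemma ImD (u v : R[i]) : complex.Im (u + v) = complex.Im u + complex.Im v.
Proof. by case: u; case: v. Qed.
Lemma Re_sum (T : Type) (s : seq T) (F : T -> R[i]) :
  complex.Re (\sum_(t <- s) F t) = \sum_(t <- s) complex.Re (F t).
Proof. by elim/big_rec2: _ => // t y1 y2 _ <-; rewrite ReD. Qed.
Lemma Im_sum (T : Type) (s : seq T) (F : T -> R[i]) :
  complex.Im (\sum_(t <- s) F t) = \sum_(t <- s) complex.Im (F t).
Proof. by elim/big_rec2: _ => // t y1 y2 _ <-; rewrite ImD. Qed.

Lemma expiD (a b : R) : expi (a + b) = expi a * expi b.
Proof.
rewrite /expi cosD sinD; apply/eqP; rewrite eq_complex /=.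
apply/andP; split; apply/eqP; ring.
Qed.

Lemma expi0 : expi (0 : R) = 1.
Proof. by rewrite /expi cos0 sin0. Qed.

Definition expsum (e : bool) : R[i] := \sum_r (x r)%:C * expi (if e then ph r else - ph r).

Lemma prodG es : \prod_(e <- es) expsum e =
  \sum_(u <- tups (size es)) (Cf x u)%:C * expi (acc ph es u).
Proof.
elim: es => [|e es IH].
  by rewrite big_nil /= big_cons big_nil addr0 /Cf big_nil /= expi0 mulr1.
rewrite big_cons IH sum_tupsS /expsum big_distrl /=; apply: eq_bigr => r _.
rewrite big_distrr /=; apply: eq_bigr => u _.
rewrite /Cf big_cons rmorphM expiD /=; ring.
Qed.
End Cx.
Section Cx2.
Variables (R : realType) (I : finType) (x ph : I -> R).
Local Open Scope complex_scope.
Local Notation G := (@expsum R I x ph).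

Lemma Re_prodG es : complex.Re (\prod_(e <- es) G e) =
  \sum_(u <- tups (size es)) Cf x u * cos (acc ph es u).
Proof.
rewrite prodG Re_sum; apply: eq_bigr => u _.
by rewrite /expi /= mul0r subr0.
Qed.

Lemma normc_mul (z : R[i]) : z * (complex.Re z +i* - complex.Im z) = ((cmod z) ^+ 2)%:C.
Proof.
case: z => P Q; rewrite /cmod /= sqr_sqrtr ?addr_ge0 ?sqr_ge0 //.
apply/eqP; rewrite eq_complex /=; apply/andP; split; apply/eqP; ring.
Qed.

Lemma Gfalse : G false = complex.Re (G true) +i* - complex.Im (G true).
Proof.
apply/eqP; rewrite eq_complex /=; apply/andP; split; apply/eqP.
  rewrite /expsum !Re_sum; apply: eq_bigr => r _; by rewrite /expi /= cosN !mul0r.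
rewrite /expsum !Im_sum -sumrN; apply: eq_bigr => r _; rewrite /expi /= sinN; ring.
Qed.

Lemma prod_nseq (l : nat) (b : bool) : \prod_(e <- nseq l b) G e = G b ^+ l.
Proof. by elim: l => [|l IH]; rewrite ?big_nil ?expr0 // big_cons IH exprS. Qed.

Lemma cmod_pow l : cmod (G true) ^+ (2 * l) =
  complex.Re (\prod_(e <- nseq l true ++ nseq l false) G e).
Proof.
rewrite big_cat /= !prod_nseq -exprMn Gfalse normc_mul -rmorphXn /=.
by rewrite exprM.
Qed.
End Cx2.
Lemma acc_lin (R : realType) (I : finType) (k : nat) (g : I -> 'I_k -> int) (c : 'I_k -> R) es u :
  acc (fun r => \sum_(j < k) (g r j)%:~R * c j) es u =
  \sum_(j < k) (acc (fun r => g r j) es u)%:~R * c j.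
Proof.
elim: es u => [|e es IH] [|r u] /=; try by rewrite big1 // => j _; rewrite mul0r.
rewrite IH; case: e.
  by rewrite -big_split /=; apply: eq_bigr => j _; rewrite intrD mulrDl.
rewrite -sumrN -big_split /=; apply: eq_bigr => j _.
by rewrite intrD mulrDl intrN mulNr.
Qed.

Lemma map_mpow (R : realType) n (M : 'M[rat]_n.+1) c :
  mpow (map_mx (ratr : rat -> R) M) c = map_mx ratr (mpow M c).
Proof.
elim: c => [|c IH] /=; first by rewrite map_mx1.
by rewrite IH map_mxM.
Qed.

Lemma main_thm (R : realType) (n : nat) (e : rel 'I_n.+1)
    (d : nat) (theta : 'I_d.+1 -> R) (E : 'I_d.+1 -> 'M[R]_n.+1)
    (k : nat) (w : 'I_k -> R) (f : 'I_d.+1 -> 'I_k -> int)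
    (a b : 'I_n.+1) (l : nat) :
  simple_graph e ->
  injective theta ->
  (forall r, eigenvalue (adjmx R e) (theta r)) ->
  (forall x : R, eigenvalue (adjmx R e) x -> exists r, theta r = x) ->
  (forall r, orth_proj (E r) (eigenspace (adjmx R e) (theta r))) ->
  Q_lin_indep w ->
  (forall r, theta r = \sum_(j < k) (f r j)%:~R * w j) ->
  (1 <= l)%N ->
  let F := fun z : seq R =>
    \sum_(r < d.+1) ((E r a b)%:C * expi (\sum_(j < k) (f r j)%:~R * nth 0 z j))%C in
  exists q : rat,
    ((pi *+ 2) ^+ k)^-1 * torus_int k (fun z => cmod (F z) ^+ (2 * l)) = ratr q.
Proof.
move=> Hsg injT hev hall hE hQ hth _ F.
set A := adjmx R e.
pose x r := E r a b.
have symA : A^T = A.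
  by apply/matrixP => i j; rewrite !mxE; case: Hsg => -> _.
have Adef : A = map_mx (ratr : rat -> R) (adjmx rat e).
  by apply/matrixP => i j; rewrite !mxE rmorph_nat.
have hpow : forall c, isQ R (\sum_r x r * theta r ^+ c).
  move=> c; have := @mpowE R n d A theta E symA injT hall hE c.
  move/(congr1 (fun M : 'M[R]_n.+1 => M a b)); rewrite summxE => H.
  exists (mpow (adjmx rat e) c a b).
  have -> : ratr (mpow (adjmx rat e) c a b) =
      (map_mx (ratr : rat -> R) (mpow (adjmx rat e) c)) a b by rewrite mxE.
  rewrite -map_mpow -Adef H.
  by apply: eq_bigr => r _; rewrite mxE mulrC.
have halg : forall r, alg R (theta r).
  move=> r; exists (char_poly (adjmx rat e)).
    exact: monic_neq0 (char_poly_monic _).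
  by rewrite map_char_poly -Adef -eigenvalue_root_char; exact: hev.
pose es := nseq l true ++ nseq l false.
have [q Hq] := @Sm_zero_rat R _ x theta hpow es halg.
exists q; rewrite -Hq.
pose fn (r : 'I_d.+1) (j : nat) : int := if insub j is Some jj then f r jj else 0.
pose mv (u : seq 'I_d.+1) (j : nat) : int := acc (fun r => fn r j) es u.
have mvE u (j : 'I_k) : mv u j = acc (fun r => f r j) es u.
  by rewrite /mv /fn valK.
pose ph (z : seq R) (r : 'I_d.+1) : R := \sum_(j < k) (f r j)%:~R * nth 0 z j.
have Hpt z : cmod (F z) ^+ (2 * l) =
    \sum_(u <- tups (size es)) Cf x u * cos (dotk R k (mv u) z + 0).
  have -> : F z = expsum R _ x (ph z) true by [].
  rewrite cmod_pow Re_prodG; apply: eq_bigr => u _; rewrite addr0 /ph acc_lin /dotk.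
  by congr (_ * cos _); apply: eq_bigr => j _; rewrite mvE.
rewrite (@torus_int_ext R k _ _ Hpt) torus_cos mulKf; last first.
  by rewrite expf_neq0 // gt_eqF // mulrn_wgt0 // pi_gt0.
rewrite /Sm; apply: eq_bigr => u _; rewrite cos0.
have -> : acc theta es u = \sum_(j < k) (acc (fun r => f r j) es u)%:~R * w j.
  by rewrite -acc_lin; congr acc; apply: funext => r; rewrite hth.
congr (_ * _); case: ifP => [/forallP H|/negbT /forallP H].
  rewrite big1 ?eqxx // => j _; have := H j; rewrite mvE => /eqP ->; exact: mul0r.
case: eqP => // Hs; exfalso; apply: H => j; rewrite mvE.
have := hQ (fun j => (acc (fun r => f r j) es u)%:~R) _ j.
move=> H0; have /eqP : (acc (fun r => f r j) es u)%:~R = 0 :> rat.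
  by apply: H0; rewrite -[RHS]Hs; apply: eq_bigr => i _; rewrite rmorph_int.
by rewrite intr_eq0.
Qed.
Local Close Scope classical_set_scope.
Theorem theorem5p2 (R : realType) (n : nat) (e : rel 'I_n)
    (d : nat) (theta : 'I_d.+1 -> R) (E : 'I_d.+1 -> 'M[R]_n)
    (k : nat) (w : 'I_k -> R) (f : 'I_d.+1 -> 'I_k -> int)
    (a b : 'I_n) (l : nat) :
  simple_graph e ->
  (* theta_0, ..., theta_d are the distinct eigenvalues of A *)
  injective theta ->
  (forall r, eigenvalue (adjmx R e) (theta r)) ->
  (forall x : R, eigenvalue (adjmx R e) x -> exists r, theta r = x) ->
  (* E_r is the orthogonal projection onto the theta_r-eigenspace *)
  (forall r, orth_proj (E r) (eigenspace (adjmx R e) (theta r))) ->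
  (* w_1, ..., w_k linearly independent over Q, theta_r = sum_l f^r_l w_l *)
  Q_lin_indep w ->
  (forall r, theta r = \sum_(j < k) (f r j)%:~R * w j) ->
  (1 <= l)%N ->
  let F := fun z : seq R =>
    \sum_(r < d.+1) ((E r a b)%:C * expi (\sum_(j < k) (f r j)%:~R * nth 0 z j))%C in
  exists q : rat,
    ((pi *+ 2) ^+ k)^-1 * torus_int k (fun z => cmod (F z) ^+ (2 * l)) = ratr q.
Proof.
case: n e E a b => [|n] e E a b; first by case: a.
exact: main_thm.
Qed.
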